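(* For every $g\ge 1$ and every degree value $d$ occurring in $\mathcal{H}_g$, $k_{\rm nn}(d)=g+1$.
   Context: $\mathcal{H}_1$ is the 4-cycle. For $g>1$, $\mathcal{H}_g$ is obtained from $\mathcal{H}_{g-1}$ by keeping every edge $\{u,v\}$ and adding two new vertices $w,w'$ with edges $\{u,w\},\{w,w'\},\{w',v\}$. For a degree value $d$, $k_{\rm nn}(d)$ is the total degree of all neighbors of all vertices of degree $d$ (summed over each such vertex and each of its neighbors) divided by the total degree of the vertices of degree $d$; i.e. the average degree of the nearest neighbors of vertices of degree $d$. *)

(* Defs.v *)
From mathcomp Require Import all_boot all_order all_algebra.
Set Implicit Arguments. Unset Strict Implicit. Unset Printing Implicit Defensive.
Import GRing.Theory Num.Theory.

(* A graph is (n, es): vertices 0..n-1, undirected edge list es (pairs). *)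
Definition graph := (nat * seq (nat * nat))%type.

Definition H1 : graph := (4, [:: (0,1); (1,2); (2,3); (3,0)]).

(* One generation step: keep every edge {u,v}; for the i-th edge add two new
   vertices w = n+2i, w' = n+2i+1 and edges {u,w},{w,w'},{w',v}. *)
Definition step (G : graph) : graph :=
  let: (n, es) := G in
  (n + 2 * size es,
   flatten [seq let: (i, (u, v)) := e in
              [:: (u, v); (u, n + 2 * i); (n + 2 * i, n + 2 * i + 1);
                  (n + 2 * i + 1, v)]
           | e <- zip (iota 0 (size es)) es]).

Definition H (g : nat) : graph := iter (g - 1) step H1.

Definition nverts (G : graph) : nat := G.1.
Definition adj (G : graph) (v u : nat) : bool :=
  has (fun e => ((e.1 == v) && (e.2 == u)) || ((e.1 == u) && (e.2 == v))) G.2.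
Definition deg (G : graph) (v : nat) : nat :=
  \sum_(u < nverts G | adj G v u) 1.

Definition knn (G : graph) (d : nat) : rat :=
  ((\sum_(v < nverts G | deg G v == d) \sum_(u < nverts G | adj G v u) deg G u)%:R
   / (\sum_(v < nverts G | deg G v == d) deg G v)%:R)%R.

(* Main.v *)
Require Import Defs.
From mathcomp Require Import all_boot all_order all_algebra zify.

Definition E (p q x y : nat) : bool := ((p == x) && (q == y)) || ((p == y) && (q == x)).
Definition ea (es : seq (nat*nat)) i := (nth (0,0) es i).1.
Definition eb (es : seq (nat*nat)) i := (nth (0,0) es i).2.
Definition Q n es i x y :=
  E (ea es i) (eb es i) x y || E (ea es i) (n + 2 * i) x y ||
  E (n + 2 * i) (n + 2 * i + 1) x y || E (n + 2 * i + 1) (eb es i) x y.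

Lemma has_flatten_map {A B : Type} (q : pred B) (F : A -> seq B) s :
  has q (flatten (map F s)) = has (fun x => has q (F x)) s.
Proof. by elim: s => //= x s IH; rewrite has_cat IH. Qed.

Lemma zip_iota_nth (s : seq (nat*nat)) :
  zip (iota 0 (size s)) s = map (fun i => (i, nth (0,0) s i)) (iota 0 (size s)).
Proof.
apply: (@eq_from_nth _ (0,(0,0))).
  by rewrite size_zip size_map size_iota minnn.
move=> i; rewrite size_zip size_iota minnn => Hi.
rewrite nth_zip ?size_iota // (nth_map 0) ?size_iota // nth_iota //.
Qed.

Lemma adjE G x y : adj G x y = has (fun e => E e.1 e.2 x y) G.2.
Proof. by []. Qed.

Lemma adjP n es x y : reflect (exists2 i, i < size es & E (ea es i) (eb es i) x y) (adj (n, es) x y).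
Proof. exact: (has_nthP (0,0)). Qed.

Lemma adj_stepP n es x y :
  reflect (exists2 i, i < size es & Q n es i x y) (adj (step (n, es)) x y).
Proof.
rewrite adjE /step /= zip_iota_nth -map_comp has_flatten_map.
apply: (iffP hasP).
  move=> [i]; rewrite mem_iota /= add0n => Hi H; exists i => //.
  move: H; rewrite /Q /E /ea /eb /=; case: (nth _ es i) => u v /=; by rewrite orbF -!orbA.
move=> [i Hi HQ]; exists i; first by rewrite mem_iota.
move: HQ; rewrite /Q /E /ea /eb /=; case: (nth _ es i) => u v /=; by rewrite orbF -!orbA.
Qed.

Definition Vok n (es : seq (nat*nat)) := forall i, i < size es -> (ea es i < n) && (eb es i < n).

Ltac destr := repeat match goal with
 | H : is_true (_ || _) |- _ => case/orP: H => H
 | H : is_true (_ && _) |- _ => let H1 := fresh "H" in case/andP: H => H H1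
 | H : is_true (_ == _) |- _ => move/eqP: H => H
 end.

Section StepAdj.
Variables (n : nat) (es : seq (nat*nat)).
Hypothesis V : Vok n es.
Let m := size es.

Lemma adj_old x y : x < n -> y < n -> adj (step (n, es)) x y = adj (n, es) x y.
Proof.
move=> Hx Hy; apply/adj_stepP/adjP => -[i Hi H]; exists i => //; move: H.
  rewrite /Q /E => H; destr; subst; rewrite ?eqxx ?orbT //; lia.
by rewrite /Q => ->.
Qed.

Lemma adj_old_w x i : x < n -> i < m -> adj (step (n, es)) x (n + 2 * i) = (ea es i == x).
Proof.
move=> Hx Hi; apply/adj_stepP/idP.
  move=> [j Hj]; have /andP[Ha Hb] := V j Hj; have /andP[Ha2 Hb2] := V i Hi; rewrite /Q /E.
  have [->|ne] := eqVneq j i => H; destr; subst; rewrite ?eqxx //; lia.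
move=> /eqP H; exists i => //; subst; rewrite /Q /E !eqxx ?orbT //.
Qed.

Lemma adj_old_w' x i : x < n -> i < m -> adj (step (n, es)) x (n + 2 * i + 1) = (eb es i == x).
Proof.
move=> Hx Hi; apply/adj_stepP/idP.
  move=> [j Hj]; have /andP[Ha Hb] := V j Hj; have /andP[Ha2 Hb2] := V i Hi; rewrite /Q /E.
  have [->|ne] := eqVneq j i => H; destr; subst; rewrite ?eqxx //; lia.
move=> /eqP H; exists i => //; subst; rewrite /Q /E !eqxx ?orbT //.
Qed.

Lemma adj_w y i : i < m -> adj (step (n, es)) (n + 2 * i) y = (y == ea es i) || (y == n + 2 * i + 1).
Proof.
move=> Hi; apply/adj_stepP/idP.
  move=> [j Hj]; have /andP[Ha Hb] := V j Hj; have /andP[Ha2 Hb2] := V i Hi; rewrite /Q /E.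
  have [->|ne] := eqVneq j i => H; destr; subst; rewrite ?eqxx ?orbT //; lia.
move=> H; exists i => //; destr; subst; rewrite /Q /E !eqxx ?orbT ?andbT //.
Qed.

Lemma adj_w' y i : i < m -> adj (step (n, es)) (n + 2 * i + 1) y = (y == n + 2 * i) || (y == eb es i).
Proof.
move=> Hi; apply/adj_stepP/idP.
  move=> [j Hj]; have /andP[Ha Hb] := V j Hj; have /andP[Ha2 Hb2] := V i Hi; rewrite /Q /E.
  have [->|ne] := eqVneq j i => H; destr; subst; rewrite ?eqxx ?orbT //; lia.
move=> H; exists i => //; destr; subst; rewrite /Q /E !eqxx ?orbT ?andbT //.
Qed.

End StepAdj.

Definition SG (G : graph) (F : nat -> nat) v := \sum_(0 <= u < G.1 | adj G v u) F u.
Definition inc (es : seq (nat*nat)) v := \sum_(e <- es) ((e.1 == v) + (e.2 == v)).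

Lemma degE G v : deg G v = SG G (fun _ => 1) v.
Proof. by rewrite /deg /SG big_mkord. Qed.

Lemma incE es v : inc es v = \sum_(0 <= i < size es) ((ea es i == v) + (eb es i == v)).
Proof. by rewrite /inc (big_nth (0,0)). Qed.

Lemma sum_split n m F : \sum_(0 <= u < n + 2 * m) F u =
  \sum_(0 <= u < n) F u + \sum_(0 <= i < m) (F (n + 2 * i) + F (n + 2 * i + 1)).
Proof.
elim: m => [|m IH]; first by rewrite muln0 addn0 (big_geq (m:=0) (n:=0)) ?addn0.
have -> : n + 2 * m.+1 = (n + 2 * m).+1.+1 by lia.
rewrite big_nat_recr; last lia. rewrite big_nat_recr; last lia. rewrite IH big_nat_recr //.
by rewrite /= addn1 !addnA.
Qed.

Lemma sum_pick N a F : \sum_(0 <= u < N) (u == a) * F u = (a < N) * F a.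
Proof.
elim: N => [|N IH]; first by rewrite big_geq.
rewrite big_nat_recr //= IH.
case: (ltngtP a N) => H.
- by rewrite mul0n addn0 (_ : a < N.+1 = true) //; lia.
- by rewrite (_ : (a < N.+1) = false) //; lia.
- by subst; rewrite ltnSn.
Qed.

Section StepSum.
Variables (n : nat) (es : seq (nat*nat)).
Hypothesis V : Vok n es.
Let m := size es.

Lemma step1 : (step (n, es)).1 = n + 2 * m. Proof. by []. Qed.

Lemma SG_old F v : v < n -> SG (step (n, es)) F v = SG (n, es) F v +
  \sum_(0 <= i < m) ((ea es i == v) * F (n + 2 * i) + (eb es i == v) * F (n + 2 * i + 1)).
Proof.
move=> Hv; rewrite /SG step1 big_mkcond sum_split /=; congr (_ + _).
  rewrite [RHS]big_mkcond; apply: eq_big_nat => u /andP[_ Hu].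
  by rewrite adj_old.
apply: eq_big_nat => i /andP[_ Hi].
rewrite adj_old_w // adj_old_w' //.
by case: (ea es i == v); case: (eb es i == v); rewrite ?mul1n ?mul0n.
Qed.

Lemma SG_w F i : i < m -> SG (step (n, es)) F (n + 2 * i) = F (ea es i) + F (n + 2 * i + 1).
Proof.
move=> Hi; have := V i Hi => /andP[Ha Hb].
rewrite /SG step1 big_mkcond.
rewrite (eq_big_nat _ _ (F2 := fun u => (u == ea es i) * F u + (u == n + 2 * i + 1) * F u)).
  rewrite big_split /= !sum_pick.
  have -> : ea es i < n + 2 * m by lia.
  have -> : n + 2 * i + 1 < n + 2 * m by rewrite /m; lia.
  by rewrite !mul1n.
move=> u _; rewrite adj_w //.
have [->|ne1] := eqVneq u (ea es i).
  by rewrite /= mul1n (_ : (ea es i == n + 2 * i + 1) = false) ?mul0n ?addn0 //; lia.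
by have [->|ne2] := eqVneq u (n + 2 * i + 1); rewrite /= ?mul0n ?mul1n ?add0n ?addn0.
Qed.

Lemma SG_w' F i : i < m -> SG (step (n, es)) F (n + 2 * i + 1) = F (n + 2 * i) + F (eb es i).
Proof.
move=> Hi; have := V i Hi => /andP[Ha Hb].
rewrite /SG step1 big_mkcond.
rewrite (eq_big_nat _ _ (F2 := fun u => (u == n + 2 * i) * F u + (u == eb es i) * F u)).
  rewrite big_split /= !sum_pick.
  have -> : eb es i < n + 2 * m by lia.
  have -> : n + 2 * i < n + 2 * m by rewrite /m; lia.
  by rewrite !mul1n.
move=> u _; rewrite adj_w' //.
have [->|ne1] := eqVneq u (n + 2 * i).
  by rewrite /= mul1n (_ : (n + 2 * i == eb es i) = false) ?mul0n ?addn0 //; lia.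
by have [->|ne2] := eqVneq u (eb es i); rewrite /= ?mul0n ?mul1n ?add0n ?addn0.
Qed.

Lemma sum_ends f : \sum_(0 <= i < m) (f (ea es i) + f (eb es i)) = \sum_(0 <= v < n) f v * inc es v.
Proof.
symmetry.
rewrite (eq_big_nat _ _ (F2 := fun v => \sum_(0 <= i < m) ((v == ea es i) * f v + (v == eb es i) * f v))); last first.
  move=> v _; rewrite incE big_distrr; apply: eq_big_nat => i _ /=.
  by rewrite mulnDr [ea es i == v]eq_sym [eb es i == v]eq_sym ![f v * _]mulnC.
rewrite exchange_big_nat; apply: eq_big_nat => i /andP[_ Hi].
have /andP[Ha Hb] := V i Hi.
by rewrite big_split /= !sum_pick Ha Hb !mul1n.
Qed.

Lemma deg_old v : v < n -> deg (step (n, es)) v = deg (n, es) v + inc es v.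
Proof.
move=> Hv; rewrite !degE SG_old // incE; congr (_ + _).
by apply: eq_big_nat => i _; rewrite !muln1.
Qed.

Lemma deg_w i : i < m -> deg (step (n, es)) (n + 2 * i) = 2.
Proof. by move=> Hi; rewrite degE SG_w. Qed.

Lemma deg_w' i : i < m -> deg (step (n, es)) (n + 2 * i + 1) = 2.
Proof. by move=> Hi; rewrite degE SG_w'. Qed.

Lemma inc_step v : inc (step (n, es)).2 v = \sum_(0 <= i < m)
  (((ea es i == v) + (eb es i == v)) + ((ea es i == v) + (n + 2 * i == v)) +
   ((n + 2 * i == v) + (n + 2 * i + 1 == v)) + ((n + 2 * i + 1 == v) + (eb es i == v))).
Proof.
rewrite /inc /step /= zip_iota_nth -map_comp big_flatten big_map.
rewrite /index_iota subn0; apply: eq_bigr => i _ /=.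
rewrite /ea /eb; case: (nth _ es i) => a b.
by rewrite !big_cons big_nil /= !addn0 !addnA.
Qed.

Lemma inc_old v : v < n -> inc (step (n, es)).2 v = 2 * inc es v.
Proof.
move=> Hv; rewrite inc_step incE big_distrr; apply: eq_big_nat => i _ /=.
have -> : (n + 2 * i == v) = false by lia.
have -> : (n + 2 * i + 1 == v) = false by lia.
rewrite !addn0; lia.
Qed.

Lemma inc_w j : j < m -> inc (step (n, es)).2 (n + 2 * j) = 2.
Proof.
move=> Hj; rewrite inc_step.
rewrite (eq_big_nat _ _ (F2 := fun i => (i == j) * 2)); first by rewrite sum_pick Hj.
move=> i /andP[_ Hi]; have /andP[Ha Hb] := V i Hi.
have -> : (ea es i == n + 2 * j) = false by lia.
have -> : (eb es i == n + 2 * j) = false by lia.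
have -> : (n + 2 * i + 1 == n + 2 * j) = false by lia.
lia.
Qed.

Lemma inc_w' j : j < m -> inc (step (n, es)).2 (n + 2 * j + 1) = 2.
Proof.
move=> Hj; rewrite inc_step.
rewrite (eq_big_nat _ _ (F2 := fun i => (i == j) * 2)); first by rewrite sum_pick Hj.
move=> i /andP[_ Hi]; have /andP[Ha Hb] := V i Hi.
have -> : (ea es i == n + 2 * j + 1) = false by lia.
have -> : (eb es i == n + 2 * j + 1) = false by lia.
have -> : (n + 2 * i == n + 2 * j + 1) = false by lia.
lia.
Qed.

End StepSum.

Lemma all_flatten_map {A B : Type} (q : pred B) (F : A -> seq B) s :
  all q (flatten (map F s)) = all (fun x => all q (F x)) s.
Proof. by elim: s => //= x s IH; rewrite all_cat IH. Qed.

Lemma VokE n es : Vok n es <-> all (fun e => (e.1 < n) && (e.2 < n)) es.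
Proof.
split.
  by move=> H; apply/(all_nthP (0,0)) => i Hi; exact: H i Hi.
by move/(all_nthP (0,0)) => H i Hi; exact: H i Hi.
Qed.

Lemma Vok_step n es : Vok n es -> Vok (step (n, es)).1 (step (n, es)).2.
Proof.
move=> V; apply/VokE; rewrite /step /= zip_iota_nth -map_comp all_flatten_map.
apply/allP => i; rewrite mem_iota => /andP[_ Hi] /=.
have := V i Hi; rewrite /ea /eb; case: (nth _ es i) => a b /= H.
rewrite add0n in Hi; lia.
Qed.

Lemma adjC G x y : adj G x y = adj G y x.
Proof. by rewrite /adj; apply: eq_has => e; rewrite orbC. Qed.

Lemma sum_SG G F : \sum_(0 <= v < G.1) SG G F v = \sum_(0 <= u < G.1) F u * deg G u.
Proof.
rewrite /SG.
rewrite (eq_bigr (fun v => \sum_(0 <= u < G.1) (if adj G v u then F u else 0))); last first.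
  by move=> v _; rewrite big_mkcond.
rewrite exchange_big_nat; apply: eq_bigr => u _.
rewrite degE /SG [in RHS]big_mkcond big_distrr.
rewrite (eq_bigr (fun i => F u * (if adj G u i then 1 else 0))) //.
by move=> v _; rewrite adjC; case: adj; rewrite ?muln1 ?muln0.
Qed.

Record Inv (G : graph) (g : nat) := {
  iV : Vok G.1 G.2;
  iI : forall v, v < G.1 -> deg G v = inc G.2 v;
  iP : forall p : pred nat, \sum_(0 <= v < G.1 | p (deg G v)) SG G (deg G) v =
        g.+1 * \sum_(0 <= v < G.1 | p (deg G v)) deg G v;
  iR : forall v, v < G.1 -> 0 < deg G v }.
Arguments iV {G g}. Arguments iI {G g}. Arguments iP {G g}. Arguments iR {G g}.

Section InvStep.
Variables (n : nat) (es : seq (nat*nat)) (g : nat).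
Hypothesis HI : Inv (n, es) g.
Let m := size es.
Let V : Vok n es := iV HI.
Let G' := step (n, es).

Lemma old_D v : v < n -> deg G' v = 2 * deg (n, es) v.
Proof. by move=> Hv; rewrite deg_old // -(iI HI) //= mul2n -addnn. Qed.

Lemma old_S v : v < n -> SG G' (deg G') v = 2 * SG (n, es) (deg (n, es)) v + 2 * deg (n, es) v.
Proof.
move=> Hv; rewrite SG_old //; congr (_ + _).
  rewrite /SG big_distrr /= big_mkcond [RHS]big_mkcond; apply: eq_big_nat => u /andP[_ Hu] /=.
  by case: adj; rewrite ?old_D ?muln0.
rewrite (iI HI) //= incE big_distrr; apply: eq_big_nat => i /andP[_ Hi] /=.
by rewrite deg_w // deg_w' // mulnDr ![2 * _]mulnC.
Qed.

Lemma new_S i : i < m -> SG G' (deg G') (n + 2 * i) = 2 * deg (n, es) (ea es i) + 2.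
Proof.
move=> Hi; have /andP[Ha Hb] := V i Hi.
by rewrite SG_w // old_D // deg_w'.
Qed.

Lemma new_S' i : i < m -> SG G' (deg G') (n + 2 * i + 1) = 2 + 2 * deg (n, es) (eb es i).
Proof.
move=> Hi; have /andP[Ha Hb] := V i Hi.
by rewrite /G' SG_w' // deg_w // old_D.
Qed.

Lemma sumD_m : \sum_(0 <= v < n) deg (n, es) v = 2 * m.
Proof.
rewrite (eq_big_nat _ _ (F2 := fun v => 1 * inc es v)); last first.
  by move=> v /andP[_ Hv]; rewrite mul1n (iI HI).
by rewrite -(@sum_ends n es V) sum_nat_const_nat subn0 mulnC.
Qed.

Lemma sumY : \sum_(0 <= i < m) (deg (n, es) (ea es i) + deg (n, es) (eb es i)) = g.+1 * (2 * m).
Proof.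
rewrite (@sum_ends n es V).
rewrite (eq_big_nat _ _ (F2 := fun v => deg (n, es) v * deg (n, es) v)); last first.
  by move=> v /andP[_ Hv]; rewrite (iI HI).
have := sum_SG (n, es) (deg (n, es)); rewrite /= => <-.
have := iP HI predT; rewrite /= => ->.
by rewrite sumD_m.
Qed.

Lemma P_step (p : pred nat) :
  \sum_(0 <= v < G'.1 | p (deg G' v)) SG G' (deg G') v =
  g.+2 * \sum_(0 <= v < G'.1 | p (deg G' v)) deg G' v.
Proof.
rewrite step1 big_mkcond [in RHS]big_mkcond !sum_split.
have HX := iP HI (fun x => p (2 * x)).
move: HX; rewrite /= big_mkcond [X in _ = _ * X]big_mkcond => HX.
set X := \sum_(0 <= v < n) (if p (2 * deg (n, es) v) then SG (n, es) (deg (n, es)) v else 0) in HX.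
set Z := \sum_(0 <= v < n) (if p (2 * deg (n, es) v) then deg (n, es) v else 0) in HX.
have E1 : \sum_(0 <= v < n) (if p (deg G' v) then SG G' (deg G') v else 0) = 2 * X + 2 * Z.
  rewrite /X /Z !big_distrr -big_split.
  apply: eq_big_nat => v /andP[_ Hv] /=.
  by rewrite old_D // old_S //; case: (p (2 * deg (n, es) v)); rewrite ?muln0.
have E3 : \sum_(0 <= v < n) (if p (deg G' v) then deg G' v else 0) = 2 * Z.
  rewrite /Z !big_distrr.
  apply: eq_big_nat => v /andP[_ Hv] /=.
  by rewrite old_D //; case: (p (2 * deg (n, es) v)); rewrite ?muln0.
have E2 : \sum_(0 <= i < m) ((if p (deg G' (n + 2 * i)) then SG G' (deg G') (n + 2 * i) else 0) +
     (if p (deg G' (n + 2 * i + 1)) then SG G' (deg G') (n + 2 * i + 1) else 0)) =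
     p 2 * (2 * \sum_(0 <= i < m) (deg (n, es) (ea es i) + deg (n, es) (eb es i)) + 4 * m).
  have -> : 4 * m = \sum_(0 <= i < m) 4 by rewrite sum_nat_const_nat subn0 mulnC.
  rewrite big_distrr -big_split big_distrr.
  apply: eq_big_nat => i /andP[_ Hi] /=.
  rewrite /G' deg_w // deg_w' // -/G' new_S // new_S' //.
  case: (p 2) => /=; lia.
have E4 : \sum_(0 <= i < m) ((if p (deg G' (n + 2 * i)) then deg G' (n + 2 * i) else 0) +
     (if p (deg G' (n + 2 * i + 1)) then deg G' (n + 2 * i + 1) else 0)) = p 2 * (4 * m).
  have -> : 4 * m = \sum_(0 <= i < m) 4 by rewrite sum_nat_const_nat subn0 mulnC.
  rewrite big_distrr.
  apply: eq_big_nat => i /andP[_ Hi] /=.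
  rewrite /G' deg_w // deg_w' //.
  case: (p 2) => /=; lia.
rewrite -/m E1 E3 E2 E4 sumY HX.
case: (p 2) => /=; nia.
Qed.

Lemma inv_step : Inv G' g.+1.
Proof.
have VG : Vok G'.1 G'.2 by exact: Vok_step.
have DI : forall v, v < G'.1 -> deg G' v = inc G'.2 v.
  move=> v; rewrite step1 => Hv.
  case: (ltnP v n) => Hvn.
    by rewrite old_D // inc_old // (iI HI).
  have [j Hj [->|->]] : exists2 j, j < m & (v = n + 2 * j \/ v = n + 2 * j + 1).
    by exists ((v - n) %/ 2); rewrite /m; lia.
    by rewrite /G' deg_w // inc_w.
  by rewrite /G' deg_w' // inc_w'.
split => //.
- exact: P_step.
- move=> v; rewrite step1 => Hv.
  case: (ltnP v n) => Hvn.
    by rewrite old_D // muln_gt0 (iR HI).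
  have [j Hj [->|->]] : exists2 j, j < m & (v = n + 2 * j \/ v = n + 2 * j + 1).
    by exists ((v - n) %/ 2); rewrite /m; lia.
    by rewrite /G' deg_w.
  by rewrite /G' deg_w'.
Qed.

End InvStep.

Lemma degH1 v : v < 4 -> deg H1 v = 2.
Proof.
rewrite degE /SG /=; case: v => [|[|[|[|v]]]] //= _; by rewrite /index_iota /= !big_cons big_nil.
Qed.

Lemma Inv_H1 : Inv H1 1.
Proof.
split.
- by apply/VokE.
- move=> v Hv; rewrite degH1 //; move: Hv; case: v => [|[|[|[|v]]]] //= _; by rewrite /inc !big_cons big_nil.
- move=> p; rewrite /= big_mkcond [in RHS]big_mkcond.
  rewrite (eq_big_nat _ _ (F2 := fun _ => if p 2 then 4 else 0)); last first.
    move=> v /andP[_ Hv]; rewrite degH1 //; case: (p 2) => //.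
    rewrite /SG /=; move: Hv; case: v => [|[|[|[|v]]]] //= _; by rewrite /index_iota /= !big_cons big_nil /= !degH1.
  rewrite [in RHS](eq_big_nat _ _ (F2 := fun _ => if p 2 then 2 else 0)); last first.
    by move=> v /andP[_ Hv]; rewrite degH1.
  by rewrite !sum_nat_const_nat; case: (p 2).
- by move=> v Hv; rewrite degH1.
Qed.

Lemma invH k : Inv (iter k step H1) k.+1.
Proof.
elim: k => [|k IH]; first exact: Inv_H1.
rewrite iterS; case: (iter k step H1) IH => n es IH; exact: inv_step.
Qed.

Import GRing.Theory Num.Theory.

Theorem proposition7 (g d : nat) :
  1 <= g ->
  (exists v : 'I_(nverts (H g)), deg (H g) v = d) ->
  knn (H g) d = ((g.+1)%:R)%R :> rat.
Proof.
move=> g1 [v0 Hv0].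
have HI : Inv (H g) g.
  rewrite /H; have := invH (g - 1); by rewrite (_ : (g - 1).+1 = g) //; lia.
set G := H g in HI Hv0 *.
have Bpos : 0 < \sum_(v < nverts G | deg G v == d) deg G v.
  rewrite (bigD1 v0) /=; last by rewrite Hv0.
  by rewrite ltn_addr // (iR HI).
have EA : (\sum_(v < nverts G | deg G v == d) \sum_(u < nverts G | adj G v u) deg G u) =
   \sum_(0 <= v < G.1 | deg G v == d) SG G (deg G) v.
  by rewrite big_mkord; apply: eq_bigr => v _; rewrite /SG big_mkord.
have EB : (\sum_(v < nverts G | deg G v == d) deg G v) = \sum_(0 <= v < G.1 | deg G v == d) deg G v.
  by rewrite big_mkord.
rewrite /knn EA.
have := iP HI (fun x => x == d); rewrite /= => ->.
rewrite -EB natrM mulfK // pnatr_eq0 -lt0n //.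
Qed.
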